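(* Let $B$ be a $p\times q$ matrix, $G$ a $q\times q$ symmetric matrix and $G'$ a $p\times p$ symmetric matrix, and let $E,F$ be $q\times q$ symmetric matrices with $E+F=G$. Let $$A=\begin{bmatrix} G' & B & B\\ B^T & 0 & G\\ B^T & G & 0\end{bmatrix},\qquad D=\begin{bmatrix} G' & B & B\\ B^T & E & F\\ B^T & F & E\end{bmatrix},$$ both of size $(p+2q)\times(p+2q)$. Then $A\oplus\begin{bmatrix} E & F\\ F & E\end{bmatrix}$ and $D\oplus\begin{bmatrix}0 & G\\ G & 0\end{bmatrix}$ are cospectral.
   Context: For matrices $X,Y$, $X\oplus Y=\begin{bmatrix} X&0\\0&Y\end{bmatrix}$, and $0$ denotes a zero matrix of appropriate size. Two square matrices are cospectral if they have the same eigenvalues with the same multiplicities. *)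

(* Defs.v *)
From mathcomp Require Import all_boot all_algebra.
Set Implicit Arguments. Unset Strict Implicit. Unset Printing Implicit Defensive.
Import GRing.Theory Num.Theory.
Local Open Scope ring_scope.

Definition dsum (R : nzRingType) m n (X : 'M[R]_m) (Y : 'M[R]_n) : 'M[R]_(m + n) :=
  block_mx X 0 0 Y.

Definition cospectral (R : realFieldType) n (X Y : 'M[R]_n) : Prop :=
  forall a : R, mup a (char_poly X) = mup a (char_poly Y).

(* Main.v *)
Require Import Defs.
From mathcomp Require Import all_boot all_algebra.
Import GRing.Theory Num.Theory.
Local Open Scope ring_scope.

Lemma cp_sim (R : fieldType) n (S X Y : 'M[R]_n) :
  S \in unitmx -> S *m X = Y *m S -> char_poly X = char_poly Y.
Proof.
move=> Su H.
have E : map_mx polyC S *m char_poly_mx X = char_poly_mx Y *m map_mx polyC S.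
  by rewrite /char_poly_mx mulmxBr mulmxBl -!map_mxM H mul_mx_scalar mul_scalar_mx.
have := congr1 determinant E; rewrite !det_mulmx det_map_mx [_ * (_%:P)]mulrC.
apply: mulfI; rewrite polyC_eq0 -unitfE -unitmxE //.
Qed.

Lemma cp_cast (R : nzRingType) n m (e : n = m) (X : 'M[R]_n) :
  char_poly (castmx (e, e) X) = char_poly X.
Proof. by case: m / e; rewrite castmx_id. Qed.

Lemma cp_dsum (R : comNzRingType) m n (X : 'M[R]_m) (Y : 'M[R]_n) :
  char_poly (block_mx X 0 0 Y) = char_poly X * char_poly Y.
Proof. by rewrite /char_poly char_block_diag_mx det_ublock. Qed.

Section M.
Variables (R : numFieldType) (p q : nat).
Local Notation T := (block_mx 1%:M 1%:M 1%:M (-1%:M) : 'M[R]_(q+q)).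

Lemma T_unit : T \in unitmx.
Proof.
have H : T *m ((2:R)^-1 *: T) = 1%:M.
  rewrite -scalemxAr mulmx_block !mulmx1 !mul1mx !mulmxN mulNmx opprK.
  rewrite mulmx1 subrr -raddfD /= -scalar_mx_block scale_scalar_mx.
  by rewrite -mulr2n mulVf // pnatr_eq0.
by case: (mulmx1_unit H).
Qed.

Lemma T_EF (X Y : 'M[R]_q) :
  T *m block_mx X Y Y X = block_mx (X + Y) 0 0 (X - Y) *m T.
Proof.
rewrite !mulmx_block ?mul1mx ?mulmx1 ?mul0mx ?mulmx0 ?add0r ?addr0 ?mulNmx ?mul1mx.
rewrite ?mulmxN ?mulmx1.
congr block_mx; rewrite ?opprB ?(addrC X) //.
Qed.
End M.

Section N.
Variables (R : numFieldType) (p q : nat).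
Local Notation T := (block_mx 1%:M 1%:M 1%:M (-1%:M) : 'M[R]_(q+q)).
Local Notation S := (block_mx 1%:M 0 0 T : 'M[R]_(p + (q+q))).

Lemma S_unit : S \in unitmx.
Proof. by rewrite unitmxE det_ublock det1 mul1r -unitmxE T_unit. Qed.

Lemma S_A (B : 'M[R]_(p, q)) G' (X Y : 'M[R]_q) :
  S *m block_mx G' (row_mx B B) (col_mx B^T B^T) (block_mx X Y Y X) =
  block_mx G' (row_mx B 0) (col_mx (B^T *+ 2) 0) (block_mx (X+Y) 0 0 (X-Y)) *m S.
Proof.
rewrite !mulmx_block ?mul1mx ?mulmx1 ?mul0mx ?mulmx0 ?add0r ?addr0.
rewrite mul_row_block mul_block_col ?mul1mx ?mulmx1 ?mul0mx ?mulmx0 ?add0r ?addr0.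
rewrite ?mulmxN ?mulmx1 ?mul0mx ?mulNmx ?mul1mx ?oppr0 ?addr0 ?subrr.
congr block_mx; rewrite ?mulr2n ?col_mx0 ?(addrC Y) ?opprB //.
all: by rewrite (addrC (- X)).
Qed.

Lemma cp_A (B : 'M[R]_(p, q)) G' (X Y : 'M[R]_q) :
  char_poly (block_mx G' (row_mx B B) (col_mx B^T B^T) (block_mx X Y Y X)) =
  char_poly (block_mx G' B (B^T *+ 2) (X + Y)) * char_poly (X - Y).
Proof.
rewrite (@cp_sim _ _ _ _ _ S_unit (S_A _ _ _ _)) block_mxA cp_cast col_mx0 row_mx0.
by rewrite cp_dsum.
Qed.

Lemma cp_EF (X Y : 'M[R]_q) :
  char_poly (block_mx X Y Y X) = char_poly (X + Y) * char_poly (X - Y).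
Proof. by rewrite (@cp_sim _ _ _ _ _ (T_unit R q) (T_EF _ _ _ _)) cp_dsum. Qed.
End N.

Theorem theorem3p18 (R : realFieldType) (p q : nat)
  (B : 'M[R]_(p, q)) (G : 'M[R]_q) (G' : 'M[R]_p) (E F : 'M[R]_q) :
  G^T = G -> G'^T = G' -> E^T = E -> F^T = F -> E + F = G ->
  let A : 'M[R]_(p + (q + q)) :=
    block_mx G' (row_mx B B) (col_mx B^T B^T) (block_mx 0 G G 0) in
  let D : 'M[R]_(p + (q + q)) :=
    block_mx G' (row_mx B B) (col_mx B^T B^T) (block_mx E F F E) in
  cospectral (dsum A (block_mx E F F E)) (dsum D (block_mx 0 G G 0)).
Proof.
move=> _ _ _ _ EFG A D a; apply: congr1.
rewrite /dsum !cp_dsum /A /D !cp_A !cp_EF EFG add0r.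
rewrite -!mulrA; apply: congr1.
by rewrite [RHS]mulrC -mulrA mulrCA.
Qed.
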